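(* Let $E$ be a Banach space, $T\colon\ell^1\to E$ a continuous linear operator with $T(e_n)\neq0$ for all $n$, and $p>1$. If $T$ is $\frac1p$-power dominated, i.e. there exists $C>0$ with $$\Big\|\sum_{j\in F}x_j^{1/p}\,T(e_j)\Big\|_E^{p}\le C\sup_{N\subset F}\Big\|\sum_{j\in N}x_jT(e_j)\Big\|_E$$ for all finite $F\subset\mathbb N$ and $(x_j)_{j\in F}\subset[0,\infty)$, then $T$ is $\frac1p$-th power factorable with a continuous extension, i.e. $T$ admits a continuous linear extension $S\colon\ell^p\to E$.
   Context: $e_n=\chi_{\{n\}}$ denotes the $n$-th unit sequence; $\ell^1\subset\ell^p$ for $p>1$. *)

(* Defs.v *)
From HB Require Import structures.
From mathcomp Require Import all_boot all_order all_algebra.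
From mathcomp Require Import all_classical all_reals all_analysis.
Set Implicit Arguments. Unset Strict Implicit. Unset Printing Implicit Defensive.
Import Order.TTheory GRing.Theory Num.Theory.
Import numFieldNormedType.Exports.
Local Open Scope classical_set_scope.
Local Open Scope ring_scope.

Definition unit_seq (R : realType) (n : nat) : nat -> R :=
  fun k => (k == n)%:R.

Definition in_lp (R : realType) (p : R) (x : nat -> R) : Prop :=
  (\sum_(k <oo) ((`|x k| `^ p)%:E) < +oo)%E.

Definition lp_norm (R : realType) (p : R) (x : nat -> R) : R :=
  (fine (\sum_(k <oo) ((`|x k| `^ p)%:E))) `^ p^-1.

Definition linear_on_lp (R : realType) (E : normedModType R) (p : R)
  (T : (nat -> R) -> E) : Prop :=
  forall (a : R) (x y : nat -> R), in_lp p x -> in_lp p y ->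
    T (fun n => a * x n + y n) = a *: T x + T y.

Definition continuous_on_lp (R : realType) (E : normedModType R) (p : R)
  (T : (nat -> R) -> E) : Prop :=
  forall x, in_lp p x -> forall eps : R, 0 < eps ->
    exists2 delta : R, 0 < delta &
      forall y, in_lp p y -> lp_norm p (fun n => y n - x n) < delta ->
        `|T y - T x| < eps.

Definition power_dominated (R : realType) (E : normedModType R) (p : R)
  (T : (nat -> R) -> E) : Prop :=
  exists2 C : R, 0 < C &
    forall (F : set nat) (x : nat -> R), finite_set F ->
      (forall j, F j -> 0 <= x j) ->
      `| \sum_(j \in F) (x j `^ p^-1) *: T (unit_seq R j) | `^ p
      <= C * sup [set `| \sum_(j \in N) x j *: T (unit_seq R j) |
                  | N in [set N : set nat | N `<=` F]].

(* Main.v *)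
Require Import Defs.
From HB Require Import structures.
From mathcomp Require Import all_boot all_order all_algebra.
From mathcomp Require Import all_classical all_reals all_analysis.
From mathcomp Require Import lra.
Import Order.TTheory GRing.Theory Num.Theory.
Import numFieldNormedType.Exports.
Local Open Scope classical_set_scope.
Local Open Scope ring_scope.

Lemma fin_series (R : realType) (f : nat -> \bar R) n :
  (forall k, (0 <= f k)%E) -> (forall k, (n <= k)%N -> f k = 0) ->
  (\sum_(k <oo) f k = \sum_(0 <= k < n) f k)%E.
Proof.
move=> f0 fn; rewrite (nneseries_split 0 n) // add0n eseries0 ?adde0 //.
by move=> i ni _; exact: fn.
Qed.

Lemma in_lp_fin (R : realType) (p : R) (x : nat -> R) n :
  0 < p -> (forall k, (n <= k)%N -> x k = 0) -> in_lp p x.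
Proof.
move=> p0 xn; rewrite /in_lp (@fin_series _ _ n).
- by rewrite sumEFin ltry.
- by move=> k; rewrite lee_fin powR_ge0.
- by move=> k /xn ->; rewrite normr0 powR0 // gt_eqF.
Qed.

Lemma lp_tail (R : realType) (p : R) (x : nat -> R) : in_lp p x ->
  forall eta : R, 0 < eta -> \forall N \near \oo, forall N',
    \sum_(N <= k < N') `|x k| `^ p < eta.
Proof.
move=> xp eta eta0.
have f0 : forall k, true -> (0 <= (`|x k| `^ p)%:E)%E.
  by move=> k _; rewrite lee_fin powR_ge0.
have := nneseries_tail_cvg xp f0.
move/fine_cvgP => [fin cv].
move/cvgr0Pnorm_lt : cv => /(_ eta eta0).
apply: filter_app; apply: filterS fin => N finN.
move=> /= lt N'.
apply: (le_lt_trans _ (le_lt_trans (ler_norm _) lt)).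
rewrite -lee_fin fineK // -sumEFin.
exact: nneseries_lim_ge.
Qed.

Lemma powR_le (R : realType) (r a b : R) :
  0 <= r -> 0 <= a -> a <= b -> a `^ r <= b `^ r.
Proof.
move=> r0 a0 ab; apply: (ge0_ler_powR r0) => //; rewrite nnegrE //.
exact: le_trans ab.
Qed.

Lemma powR_lt (R : realType) (r a b : R) :
  0 < r -> 0 <= a -> a < b -> a `^ r < b `^ r.
Proof.
move=> r0 a0 ab; apply: (gt0_ltr_powR r0) => //; rewrite nnegrE //.
exact: le_trans (ltW ab).
Qed.

Arguments powR_le {R r a b}.
Arguments powR_lt {R r a b}.

Lemma tail_small (R : realType) (p : R) (x : nat -> R) : in_lp p x ->
  forall eta : R, 0 < eta -> \forall N \near \oo,
    fine (\sum_(N <= k <oo) ((`|x k| `^ p)%:E))%E < eta.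
Proof.
move=> xp eta eta0.
have f0 : forall k, true -> (0 <= (`|x k| `^ p)%:E)%E.
  by move=> k _; rewrite lee_fin powR_ge0.
have := nneseries_tail_cvg xp f0.
move/fine_cvgP => [fin cv].
move/cvgr0Pnorm_lt : cv => /(_ eta eta0).
by apply: filterS => N /= h; apply: le_lt_trans (ler_norm _) h.
Qed.

Lemma partial_le (R : realType) (p : R) (z : nat -> R) n : in_lp p z ->
  \sum_(0 <= k < n) `|z k| `^ p <= fine (\sum_(k <oo) ((`|z k| `^ p)%:E))%E.
Proof.
move=> zp; rewrite -lee_fin fineK; last first.
  by rewrite ge0_fin_numE //; apply: nneseries_ge0 => k _ _; rewrite lee_fin powR_ge0.
rewrite -sumEFin; apply: nneseries_lim_ge => k _ _; by rewrite lee_fin powR_ge0.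
Qed.

Lemma in_lp_sub (R : realType) (p : R) (x y : nat -> R) : 0 < p ->
  in_lp p x -> in_lp p y -> in_lp p (fun n => y n - x n).
Proof.
move=> p0 xp yp.
have pw : forall a b : R, `|b - a| `^ p <= 2 `^ p * (`|a| `^ p + `|b| `^ p).
  move=> a b; wlog h : a b / `|a| <= `|b|.
    move=> H; case: (leP `|a| `|b|) => [|/ltW] h; first exact: H.
    by rewrite distrC (addrC (`|a| `^ p)); exact: H.
  have h2 : `|b - a| <= 2 * `|b|.
    by have := ler_normB b a; lra.
  apply: (le_trans (powR_le (ltW p0) (normr_ge0 _) h2)).
  rewrite powRM // ?normr_ge0 //; apply: ler_wpM2l; first exact: powR_ge0.
  by have := powR_ge0 `|a| p; lra.
rewrite /in_lp in xp yp *.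
have fx : (\sum_(k <oo) ((`|x k| `^ p)%:E))%E \is a fin_num.
  by rewrite ge0_fin_numE //; apply: nneseries_ge0 => k _ _; rewrite lee_fin powR_ge0.
have fy : (\sum_(k <oo) ((`|y k| `^ p)%:E))%E \is a fin_num.
  by rewrite ge0_fin_numE //; apply: nneseries_ge0 => k _ _; rewrite lee_fin powR_ge0.
apply: (@le_lt_trans _ _ (\sum_(k <oo) ((2 `^ p)%:E * ((`|x k| `^ p)%:E + (`|y k| `^ p)%:E)))%E).
  apply: lee_nneseries => [k _ _|k _]; first by rewrite lee_fin powR_ge0.
  by rewrite -EFinD -EFinM lee_fin pw.
rewrite nneseriesZl; last by move=> k _; rewrite adde_ge0 // lee_fin powR_ge0.
rewrite nneseriesD; [|by move=> k _ _; rewrite lee_fin powR_ge0|by move=> k _ _; rewrite lee_fin powR_ge0].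
rewrite -ge0_fin_numE ?fin_numM ?fin_numD ?fx ?fy //.
by rewrite mule_ge0 ?adde_ge0 ?lee_fin ?powR_ge0 //; apply: nneseries_ge0 => k _ _; rewrite lee_fin powR_ge0.
Qed.

Theorem lemma7p5 (R : realType) (E : completeNormedModType R)
  (T : (nat -> R) -> E) (p : R) :
  linear_on_lp 1 T -> continuous_on_lp 1 T ->
  (forall n : nat, T (unit_seq R n) != 0) ->
  1 < p ->
  power_dominated p T ->
  exists S : (nat -> R) -> E,
    [/\ linear_on_lp p S, continuous_on_lp p S &
        forall x, in_lp 1 x -> S x = T x].
Proof.
move=> lin cT _ p1 [C C0 dom].
have p0 : 0 < p by apply: lt_trans p1.
have in0 : in_lp 1 (fun _ : nat => 0 : R) by apply: (@in_lp_fin _ _ _ 0).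
have T0 : T (fun _ => 0) = 0.
  have := lin 1 _ _ in0 in0.
  rewrite (_ : (fun n => 1 * 0 + 0) = fun _ => 0); last by apply/funext => n; rewrite mulr0 addr0.
  rewrite scale1r => h; apply: (@addrI _ (T (fun _ => 0))); by rewrite addr0 -h.
have ine : forall j, in_lp 1 (unit_seq R j).
  move=> j; apply: (@in_lp_fin _ _ _ j.+1) => // k jk.
  by rewrite /unit_seq gtn_eqF.
have Tsc : forall c j, T (fun n => c * unit_seq R j n) = c *: T (unit_seq R j).
  move=> c j; have := lin c _ _ (ine j) in0.
  rewrite T0 addr0 => <-; congr T; apply/funext => n; by rewrite addr0.
have [M M0 HM] : exists2 M : R, 0 < M & forall j, `|T (unit_seq R j)| <= M.
  have [d d0 Hd] := cT _ in0 1 ltr01.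
  exists (2 / d); first by rewrite divr_gt0.
  move=> j.
  have iny : in_lp 1 (fun n => d / 2 * unit_seq R j n).
    apply: (@in_lp_fin _ _ _ j.+1) => // k jk.
    by rewrite /unit_seq gtn_eqF // mulr0.
  have hn : lp_norm 1 (fun n => d / 2 * unit_seq R j n - 0) = d / 2.
    rewrite /lp_norm (@fin_series _ _ j.+1); last first.
    - by move=> k jk; rewrite /unit_seq gtn_eqF // mulr0 subr0 normr0 powR0.
    - by move=> k; rewrite lee_fin powR_ge0.
    rewrite big_nat_recr //= big1_seq ?add0e /=; last first.
      move=> k /=; rewrite mem_index_iota => /andP[_ kj].
      by rewrite /unit_seq ltn_eqF // mulr0 subr0 normr0 powR0.
    rewrite /unit_seq eqxx mulr1 subr0 invr1 powRr1 // powRr1 //.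
      by rewrite ger0_norm // divr_ge0 // ltW.
  have h1 := Hd _ iny; rewrite /= hn in h1.
  have h2 : d / 2 < d by lra.
  move: (h1 h2); rewrite Tsc T0 subr0 normrZ ger0_norm; last by lra.
  move=> h3.
  have -> : 2 / d = (d / 2)^-1 * 1 by rewrite mulr1 invf_div.
  by rewrite ler_pdivlMl ?divr_gt0 // ltW.
pose K0 := (C * M) `^ p^-1.
have K00 : 0 < K0 by apply: powR_gt0; apply: mulr_gt0.
have HK0 : forall (y : nat -> R) m n, (forall j, 0 <= y j) ->
    `|\sum_(m <= j < n) y j *: T (unit_seq R j)| <=
    K0 * (\sum_(m <= j < n) y j `^ p) `^ p^-1.
  move=> y m n y0.
  pose x := fun j => y j `^ p.
  have x0 : forall j, 0 <= x j by move=> j; apply: powR_ge0.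
  have := dom [set` index_iota m n] x (finite_seq _) (fun j _ => x0 j).
  have -> : (\sum_(j \in [set` index_iota m n]) (x j `^ p^-1) *: T (unit_seq R j))
      = \sum_(m <= j < n) y j *: T (unit_seq R j).
    rewrite -fsbig_seq ?iota_uniq //; apply: eq_bigr => j _.
    by rewrite /x -powRrM mulfV ?gt_eqF // powRr1.
  have hsup : sup [set `|\sum_(j \in N) x j *: T (unit_seq R j)|
                  | N in [set N : set nat | N `<=` [set` index_iota m n]]]
      <= M * \sum_(m <= j < n) x j.
    apply: ge_sup.
      by exists (`|\sum_(j \in set0) x j *: T (unit_seq R j)|); exists set0.
    move=> z [N NF <-].
    rewrite -(setIidl NF) fsbig_mkcondl -fsbig_seq ?iota_uniq //.
    apply: (le_trans (ler_norm_sum _ _ _)).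
    rewrite mulr_sumr; apply: ler_sum => j _.
    case: ifP => _; last by rewrite normr0 mulr_ge0 // ltW.
    by rewrite normrZ ger0_norm // mulrC ler_wpM2r.
  move=> h.
  have h' := le_trans h (ler_wpM2l (ltW C0) hsup).
  have -> : `|\sum_(m <= j < n) y j *: T (unit_seq R j)| =
     (`|\sum_(m <= j < n) y j *: T (unit_seq R j)| `^ p) `^ p^-1.
    by rewrite -powRrM mulfV ?gt_eqF // powRr1.
  rewrite mulrA in h'.
  rewrite /K0 -powRM; last 2 first.
  - by rewrite mulr_ge0 // ltW.
  - by apply: sumr_ge0 => j _; apply: powR_ge0.
  by apply: powR_le; rewrite ?invr_ge0 ?powR_ge0 // ltW.
pose K := 2 * K0.
have K0p : 0 < K by rewrite /K mulr_gt0.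
have HK : forall (y : nat -> R) m n,
    `|\sum_(m <= j < n) y j *: T (unit_seq R j)| <=
    K * (\sum_(m <= j < n) `|y j| `^ p) `^ p^-1.
  move=> y m n.
  pose yp := fun j => (`|y j| + y j) / 2.
  pose ym := fun j => (`|y j| - y j) / 2.
  have hy : forall j, [/\ y j <= `|y j|, - y j <= `|y j| & 0 <= `|y j|].
    move=> j; split; [exact: ler_norm | | exact: normr_ge0].
    by rewrite -normrN; exact: ler_norm.
  have yp0 : forall j, 0 <= yp j by move=> j; case: (hy j) => ? ? ?; rewrite /yp; lra.
  have ym0 : forall j, 0 <= ym j by move=> j; case: (hy j) => ? ? ?; rewrite /ym; lra.
  have -> : \sum_(m <= j < n) y j *: T (unit_seq R j) =
     \sum_(m <= j < n) yp j *: T (unit_seq R j) - \sum_(m <= j < n) ym j *: T (unit_seq R j).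
    rewrite -sumrB; apply: eq_bigr => j _; rewrite -scalerBl; congr (_ *: _).
    by rewrite /yp /ym; lra.
  have Q : forall z : nat -> R, (forall j, 0 <= z j <= `|y j|) ->
     (\sum_(m <= j < n) z j `^ p) `^ p^-1 <= (\sum_(m <= j < n) `|y j| `^ p) `^ p^-1.
    move=> z hz; apply: powR_le.
    - by rewrite invr_ge0 ltW.
    - by apply: sumr_ge0 => j _; apply: powR_ge0.
    apply: ler_sum => j _; case/andP: (hz j) => ? ?; exact: powR_le (ltW p0) _ _.
  apply: (le_trans (ler_normB _ _)).
  rewrite (_ : K = K0 + K0); last by rewrite /K; lra.
  rewrite mulrDl; apply: lerD.
  - apply: (le_trans (HK0 _ _ _ yp0)); apply: ler_wpM2l; first exact: ltW.
    apply: Q => j; rewrite yp0 /=.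
    by case: (hy j) => ? ? ?; rewrite /yp; lra.
  - apply: (le_trans (HK0 _ _ _ ym0)); apply: ler_wpM2l; first exact: ltW.
    apply: Q => j; rewrite ym0 /=.
    by case: (hy j) => ? ? ?; rewrite /ym; lra.
have Htail : forall x, in_lp p x -> forall eps, 0 < eps ->
   \forall N \near \oo, forall N',
     `|\sum_(N <= k < N') x k *: T (unit_seq R k)| < eps.
  move=> x xp eps eps0.
  have eta0 : 0 < (eps / K) `^ p by apply: powR_gt0; rewrite divr_gt0.
  apply: filterS (@lp_tail _ _ _ xp _ eta0) => N HN N'.
  apply: (le_lt_trans (HK _ _ _)).
  rewrite -ltr_pdivlMl // mulrC.
  rewrite (_ : eps / K = ((eps / K) `^ p) `^ p^-1); last first.
    by rewrite -powRrM mulfV ?gt_eqF // powRr1 // ltW // divr_gt0.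
  apply: powR_lt; first by rewrite invr_gt0.
    by apply: sumr_ge0 => j _; apply: powR_ge0.
  exact: HN.
have Scvg : forall x, in_lp p x -> cvgn (series (fun j => x j *: T (unit_seq R j))).
  move=> x xp; apply/cauchy_cvgP; apply/cauchy_seriesP => eps eps0.
  have [N _ HN] := Htail x xp eps eps0.
  exists ([set n | (N <= n)%N], [set n | (N <= n)%N]); first by split; exists N.
  by move=> [a b] [/= Na _]; apply: HN.
pose S := fun x : nat -> R => lim (series (fun j => x j *: T (unit_seq R j)) @ \oo).
exists S; split.
- move=> a x y xp yp; rewrite /S.
  have -> : series (fun j => (a * x j + y j) *: T (unit_seq R j)) =
     fun n => a *: series (fun j => x j *: T (unit_seq R j)) n
              + series (fun j => y j *: T (unit_seq R j)) n.
    apply/funext => n; rewrite !seriesEnat /= scaler_sumr -big_split /=.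
    by apply: eq_bigr => j _; rewrite scalerDl scalerA.
  apply: cvg_lim => //; apply: cvgD; last exact: Scvg.
  by apply: cvgZ; [exact: cvg_cst | exact: Scvg].
- move=> x xp eps eps0; exists (eps / K); first by rewrite divr_gt0.
  move=> y yp hn.
  have zp := @in_lp_sub _ _ _ _ p0 xp yp.
  pose sz := series (fun j => (y j - x j) *: T (unit_seq R j)).
  have czl : sz @ \oo --> S y - S x.
    have -> : sz = fun n => series (fun j => y j *: T (unit_seq R j)) n
                   - series (fun j => x j *: T (unit_seq R j)) n.
      apply/funext => n; rewrite /sz !seriesEnat /= -sumrB.
      by apply: eq_bigr => j _; rewrite scalerBl.
    by apply: cvgB; exact: Scvg.
  have -> : `|S y - S x| = lim (`|sz n| @[n --> \oo]).
    by apply/esym/cvg_lim => //; exact: cvg_norm czl.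
  apply: (@le_lt_trans _ _ (K * lp_norm p (fun n => y n - x n))).
    apply: limr_le; first by apply/cvg_ex; eexists; exact: cvg_norm czl.
    near=> n; rewrite /sz seriesEnat /=.
    apply: (le_trans (HK _ _ _)); apply: ler_wpM2l; first exact: ltW.
    rewrite /lp_norm; apply: powR_le; first by rewrite invr_ge0 ltW.
      by apply: sumr_ge0 => j _; apply: powR_ge0.
    exact: partial_le.
  by rewrite -ltr_pdivlMl // mulrC.
- move=> x x1; rewrite /S; apply: cvg_lim => //.
  pose t := fun N k => if (k < N)%N then x k else 0.
  have tin : forall N, in_lp 1 (t N).
    move=> N; apply: (@in_lp_fin _ _ _ N) => // k.
    by rewrite /t leqNgt => /negbTE ->.
  have Tt : forall N, T (t N) = series (fun j => x j *: T (unit_seq R j)) N.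
    elim=> [|N IH].
      by rewrite seriesEnat /= big_geq // -T0.
    have -> : t N.+1 = fun k => x N * unit_seq R N k + t N k.
      apply/funext => k; rewrite /t /unit_seq ltnS.
      case: (ltngtP k N) => h /=; first by rewrite mulr0 add0r.
        by rewrite mulr0 addr0.
      by rewrite h mulr1 addr0.
    rewrite (lin _ _ _ (ine N) (tin N)) IH !seriesEnat /= big_nat_recr //= addrC.
    by [].
  apply/cvgrPdist_lt => eps eps0.
  have [d d0 Hd] := cT x x1 eps eps0.
  apply: filterS (@tail_small _ _ _ x1 _ d0) => N hN.
  rewrite -Tt distrC; apply: Hd; first exact: tin.
  have f0 : forall k, (0 <= (`|x k| `^ 1)%:E)%E by move=> k; rewrite lee_fin powR_ge0.
  rewrite /lp_norm invr1 powRr1; last first.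
    by apply: fine_ge0; apply: nneseries_ge0 => k _ _; rewrite lee_fin powR_ge0.
  have -> : (\sum_(k <oo) ((`|t N k - x k| `^ 1)%:E))%E =
            (\sum_(N <= k <oo) ((`|x k| `^ 1)%:E))%E.
    rewrite (nneseries_split 0 N); last by move=> k _; rewrite lee_fin powR_ge0.
    rewrite add0n big1_seq ?add0e; last first.
      move=> k /=; rewrite mem_index_iota => /andP[_ kN].
      by rewrite /t kN subrr normr0 powR0.
    rewrite eseries_cond [RHS]eseries_cond; apply: eq_eseriesr => k /andP[_ Nk].
    by rewrite /t ltnNge Nk /= sub0r normrN.
  exact: hN.
Unshelve. all: by end_near.
Qed.
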